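(* For every sufficiently large integer $m$ there is a pseudoexpander with $m$ roots in which every root has pseudodegree at most $m^{1/4.9}$.
   Context: Logarithms are base 2. A rooted tree is extended if none of its leaves has a sibling. A graph $H$ is a binary tree based graph if it is the edge-disjoint union of extended rooted trees $T_1,\dots,T_m$ with roots $t_1,\dots,t_m$ (the roots of $H$, forming ${\bf Roots}(H)$) such that every vertex that is a leaf of some $T_i$ is a leaf of exactly two of the trees, and any two of the trees have at most one common vertex, which is then a leaf of both. $T_i,T_j$ are adjacent if they share a leaf. A pseudoedge is a pair $\{t_i,t_j\}$ with $T_i,T_j$ adjacent; the pseudodegree of $t_i$ is the number of pseudoedges containing $t_i$. A pseudomatching is a set of pairwise disjoint pseudoedges; it is between disjoint $U,V\subseteq{\bf Roots}(H)$ if each of its pseudoedges has one end in $U$ and one in $V$. $H$ is a pseudoexpander (with $m=|{\bf Roots}(H)|$) if (1) each $T_i$ has height (largest number of vertices on a root-leaf path) at most $(\log m)/4.9+3$, and (2) for any two disjoint $U,V\subseteq {\bf Roots}(H)$ with $|U|,|V|\ge m^{0.999}$ there is a pseudomatching between $U$ and $V$ of size at least $m^{0.999}/3$. *)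

(* Defs.v *)
From mathcomp Require Import all_boot.
From Stdlib Require Import Reals.
Set Implicit Arguments. Unset Strict Implicit. Unset Printing Implicit Defensive.

(* Tree T_i is given by its vertex set S i, its root r i, and a parent map
   p i : the edges of T_i are the pairs {v, p i v} for v in S i, v <> r i. *)
Section BTBG.
Variables (m n : nat).
Variables (S : 'I_m -> {set 'I_n}) (p : 'I_m -> 'I_n -> 'I_n) (r : 'I_m -> 'I_n).

Definition rooted_tree (i : 'I_m) : Prop :=
  r i \in S i /\
  (forall v, v \in S i -> v != r i -> p i v \in S i) /\
  (forall v, v \in S i -> exists k, iter k (p i) v = r i).

Definition child (i : 'I_m) (u v : 'I_n) : bool :=
  [&& v \in S i, v != r i & p i v == u].

Definition leaf (i : 'I_m) (v : 'I_n) : bool :=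
  (v \in S i) && [forall w, ~~ child i v w].

Definition sibling (i : 'I_m) (v w : 'I_n) : bool :=
  [&& w != v, child i (p i v) v & child i (p i v) w].

Definition extended (i : 'I_m) : Prop :=
  rooted_tree i /\ forall v w, leaf i v -> ~~ sibling i v w.

Definition tree_edges (i : 'I_m) : {set {set 'I_n}} :=
  [set [set v; p i v] | v in S i :\ r i].

Definition binary_tree_based : Prop :=
  (forall i, extended i) /\
  (forall i j, i != j -> [disjoint tree_edges i & tree_edges j]) /\
  (forall i v, leaf i v -> #|[set j | leaf j v]| = 2) /\
  (forall i j, i != j -> #|S i :&: S j| <= 1 /\
     forall v, v \in S i :&: S j -> leaf i v && leaf j v).

(* Roots(H) = {r i}; we require the m roots to be distinct, so that
   |Roots(H)| = m and roots are identified with indices 'I_m. *)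
Definition roots_distinct : Prop := injective r.

Definition adjacent (i j : 'I_m) : bool :=
  (i != j) && [exists v, leaf i v && leaf j v].

Definition pseudodegree (i : 'I_m) : nat := #|[set j | adjacent i j]|.

(* M is a pseudomatching between U and V (U, V disjoint): each pair (i,j)
   in M stands for the pseudoedge {t_i,t_j} with t_i in U, t_j in V, and
   distinct pseudoedges of M are disjoint. *)
Definition pseudomatching_between (U V : {set 'I_m})
    (M : {set 'I_m * 'I_m}) : Prop :=
  (forall e, e \in M -> [&& e.1 \in U, e.2 \in V & adjacent e.1 e.2]) /\
  (forall e f, e \in M -> f \in M -> e != f ->
     [/\ e.1 != f.1, e.1 != f.2, e.2 != f.1 & e.2 != f.2]).

Local Open Scope R_scope.

Definition log2 (x : R) : R := ln x / ln 2.

Definition pseudoexpander : Prop :=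
  binary_tree_based /\ roots_distinct /\
  (forall i v, leaf i v ->
     exists k, iter k (p i) v = r i /\
       INR k.+1 <= log2 (INR m) / (49 / 10) + 3) /\
  (forall U V : {set 'I_m}, [disjoint U & V] ->
     Rpower (INR m) (999 / 1000) <= INR #|U| ->
     Rpower (INR m) (999 / 1000) <= INR #|V| ->
     exists M, pseudomatching_between U V M /\
       Rpower (INR m) (999 / 1000) / 3 <= INR #|M|).

End BTBG.

(* Main.v *)
Require Import Defs.
From mathcomp Require Import all_boot.
From Stdlib Require Import Reals.
From mathcomp Require Import zify.
From Stdlib Require Import Lra.
From Stdlib Require Znat.
Local Notation "m ^ n" := (expn m n) : nat_scope.
Set Implicit Arguments. Unset Strict Implicit. Unset Printing Implicit Defensive.

Lemma card_bad (k m : nat) (A B : {set 'I_m}) (y0 : 'I_m) :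
  #|[set F : {ffun 'I_k * 'I_m -> 'I_m} | [forall z, (z.2 \in A) ==> (F z \notin B)]]|
  = (m - #|B|) ^ (k * #|A|) * m ^ (k * (m - #|A|)).
Proof.
pose Fp := fun z : 'I_k * 'I_m => if z.2 \in A then [pred y | y \notin B] else predT.
have -> : [set F : {ffun 'I_k * 'I_m -> 'I_m} | [forall z, (z.2 \in A) ==> (F z \notin B)]]
   = [set F in pfamily y0 predT Fp].
  apply/setP=> F; rewrite [in LHS]inE [in RHS]inE; apply/forallP/pfamilyP.
    move=> H; split; first by apply/supportP => x; rewrite inE.
    move=> x _; rewrite /Fp; case: ifP => // xA; have := H x; by rewrite xA.
  move=> [_ H] z; have := H z isT; rewrite /Fp; case: ifP => //=.
have cC : forall C : {set 'I_m}, #|~: C| = m - #|C|.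
  by move=> C; rewrite cardsCs setCK card_ord.
rewrite cardsE card_pfamily foldrE big_map big_filter /=.
rewrite (bigID (fun z : 'I_k * 'I_m => z.2 \in A)) /=.
rewrite (eq_bigr (fun _ => m - #|B|)); last first.
  move=> z zA; rewrite /Fp zA -cC.
  by apply: eq_card => y; rewrite !inE.
rewrite [X in _ * X](eq_bigr (fun _ => m)); last first.
  move=> z zA; rewrite /Fp (negbTE zA) /= -[RHS](card_ord m); exact: eq_card.
rewrite !prod_nat_const.
have -> : #|[pred z : 'I_k * 'I_m | z.2 \in A]| = #|setX [set: 'I_k] A|.
  by apply: eq_card => z; rewrite !inE.
have -> : #|[pred z : 'I_k * 'I_m | z.2 \notin A]| = #|setX [set: 'I_k] (~: A)|.
  by apply: eq_card => z; rewrite !inE.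
by rewrite !cardsX cardsT card_ord cC.
Qed.

Lemma card_bigcup_le (I T : finType) (P : {pred I}) (F : I -> {set T}) :
  #|\bigcup_(i in P) F i| <= \sum_(i in P) #|F i|.
Proof.
apply: (big_ind2 (fun (X : {set T}) (n : nat) => #|X| <= n)).
- by rewrite cards0.
- move=> X1 n1 X2 n2 h1 h2; apply: leq_trans (leq_card_setU X1 X2) _.
  exact: leq_add.
- by [].
Qed.

Lemma exists_good_F k m t : 0 < m ->
  2^m * 2^m * ((m-t)^(k*t) * m^(k*(m-t))) < m^(k*m) ->
  exists F : {ffun 'I_k * 'I_m -> 'I_m}, forall A B : {set 'I_m},
    #|A| = t -> #|B| = t -> exists z : 'I_k * 'I_m, z.2 \in A /\ F z \in B.
Proof.
move=> m0 H.
pose y0 : 'I_m := Ordinal m0.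
pose bad (AB : {set 'I_m} * {set 'I_m}) :=
  [set F : {ffun 'I_k * 'I_m -> 'I_m} | [forall z, (z.2 \in AB.1) ==> (F z \notin AB.2)]].
pose P := [set AB : {set 'I_m} * {set 'I_m} | (#|AB.1| == t) && (#|AB.2| == t)].
pose Bad := \bigcup_(AB in P) bad AB.
have cBad : #|Bad| < #|{ffun 'I_k * 'I_m -> 'I_m}|.
  rewrite card_ffun card_prod !card_ord.
  apply: leq_ltn_trans (card_bigcup_le _ _) _.
  rewrite (eq_bigr (fun _ => (m-t)^(k*t) * m^(k*(m-t)))); last first.
    move=> [A B]; rewrite inE /= => /andP[/eqP hA /eqP hB].
    by rewrite /bad /= (card_bad _ _ _ y0) hA hB.
  rewrite sum_nat_const; apply: leq_ltn_trans H; rewrite leq_mul2r; apply/orP; right.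
  apply: leq_trans (subset_leq_card (subsetT P)) _.
  have cs : #|{set 'I_m}| = 2^m by rewrite -cardsT -powersetT card_powerset cardsT card_ord.
  by rewrite cardsT card_prod cs.
have : #|~: Bad| > 0.
  rewrite -(ltn_add2l #|Bad|) cardsC addn0 //.
rewrite card_gt0 => /set0Pn [F]; rewrite inE => FB.
exists F => A B hA hB.
have : F \notin bad (A, B).
  apply: contra FB => Fb; apply/bigcupP; exists (A, B) => //.
  by rewrite inE /=; apply/andP; split; apply/eqP.
rewrite inE negb_forall => /existsP [z]; rewrite negb_imply negbK => /andP[h1 h2].
by exists z.
Qed.

Lemma leq_expr m n e : m <= n -> m ^ e <= n ^ e.
Proof. by move=> h; elim: e => [|e IH]; rewrite ?expn0 // !expnS leq_mul. Qed.

Lemma bern_aux a b j : a ^ j * (a + j * b) <= (a + b) ^ j * a.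
Proof.
elim: j => [|j IH]; first by rewrite !expn0 mul0n addn0 !mul1n.
rewrite !expnS.
apply: leq_trans (_ : (a + b) * (a ^ j * (a + j * b)) <= _); last first.
  by rewrite -mulnA leq_mul2l IH orbT.
have -> : (a + b) * (a ^ j * (a + j * b)) = a ^ j * ((a + b) * (a + j * b)) by nia.
rewrite mulSn. have := leq_pmul2l. nia.
Qed.

Lemma bern2 m t j : 0 < j -> t <= m -> m - t <= j * t -> 2 * (m - t) ^ j <= m ^ j.
Proof.
move=> j0 tm h.
have em : m = (m - t) + t by rewrite subnK.
case a0 : (m - t) => [|a].
  by rewrite exp0n // muln0.
have := bern_aux (m - t) t j; rewrite -em a0 => H.
rewrite -(leq_pmul2r (ltn0Sn a)); apply: leq_trans H.
rewrite mulnAC mulnC leq_mul2l; apply/orP; right.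
rewrite a0 in h. by rewrite mul2n -addnn leq_add2l.
Qed.

Lemma count_ineq m t j k : 0 < m -> 0 < j -> t <= m -> m - t <= j * t ->
  j * (2 * m + 1) <= k * t ->
  2^m * 2^m * ((m-t)^(k*t) * m^(k*(m-t))) < m^(k*m).
Proof.
move=> m0 j0 tm h1 h2.
have ekm : k * m = k * t + k * (m - t) by rewrite -mulnDr subnKC.
rewrite ekm expnD mulnA ltn_pmul2r ?expn_gt0 ?m0 //.
set K := k * t - j * (2 * m + 1).
have ekt : k * t = j * (2 * m + 1) + K by rewrite subnKC.
have E1 : forall x, x ^ (k * t) = (x ^ j) ^ (2 * m + 1) * x ^ K.
  by move=> x; rewrite -expnM -expnD -ekt.
have key : 2 * (2 ^ m * 2 ^ m * (m - t) ^ (k * t)) <= m ^ (k * t).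
  rewrite !E1.
  have b := bern2 j0 tm h1.
  have b2 : (2 * (m - t) ^ j) ^ (2 * m + 1) <= (m ^ j) ^ (2 * m + 1) by exact: leq_expr.
  rewrite expnMn in b2.
  have b3 : (m - t) ^ K <= m ^ K by apply: leq_expr; rewrite leq_subr.
  have e2 : 2 ^ (2 * m + 1) = 2 * (2 ^ m * 2 ^ m) by rewrite -expnD addnn -mul2n expnD expn1 mulnC.
  rewrite e2 in b2.
  apply: leq_trans (leq_mul b2 b3).
  by rewrite !mulnA.
have pos : 0 < m ^ (k * t) by rewrite expn_gt0 m0.
lia.
Qed.

Section Graph.
Variables (k m D : nat) (F : {ffun 'I_k * 'I_m -> 'I_m}).

Definition E0 (x y : 'I_m) : bool :=
  (x != y) && [exists j : 'I_k, (F (j, x) == y) || (F (j, y) == x)].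
Definition deg0 x := #|[set y | E0 x y]|.
Definition good x := deg0 x <= D.
Definition pe (x y : 'I_m) : bool := ((nat_of_ord x).+1 == nat_of_ord y) || ((nat_of_ord y).+1 == nat_of_ord x).
Definition EE (x y : 'I_m) : bool := (E0 x y && good x && good y) || pe x y.

Lemma E0_sym x y : E0 x y = E0 y x.
Proof.
rewrite /E0 eq_sym; congr (_ && _); apply/existsP/existsP => [][j h]; exists j; by rewrite orbC.
Qed.

Lemma EE_sym x y : EE x y = EE y x.
Proof.
rewrite /EE; have -> : pe x y = pe y x by rewrite /pe orbC.
by rewrite /EE E0_sym; case: (E0 y x); case: (good x); case: (good y).
Qed.

Lemma EE_irr x : EE x x = false.
Proof. rewrite /EE /E0 eqxx /pe orbb /=; apply/negbTE; lia. Qed.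

Lemma card_val_eq (c : nat) : #|[set y : 'I_m | nat_of_ord y == c]| <= 1.
Proof.
apply/card_le1_eqP => y z; rewrite !inE => /eqP hy /eqP hz; apply: ord_inj; by rewrite hy hz.
Qed.

Lemma EE_deg x : #|[set y | EE x y]| <= D + 2.
Proof.
have sub : [set y | EE x y] \subset
   [set y | E0 x y && good x] :|: ([set y : 'I_m | nat_of_ord y == (nat_of_ord x).+1] :|: [set y : 'I_m | (nat_of_ord y).+1 == nat_of_ord x]).
  apply/subsetP => y; rewrite !inE /EE /pe.
  case: (E0 x y); case: (good x); case: (good y) => //=; lia.
apply: leq_trans (subset_leq_card sub) _.
apply: leq_trans (leq_card_setU _ _) _; apply: leq_add.
  case gx : (good x).
    apply: leq_trans gx; apply: subset_leq_card; apply/subsetP => y; by rewrite !inE andbT.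
  rewrite (_ : [set y | _] = set0) ?cards0 //; apply/setP => y; by rewrite !inE andbF.
apply: leq_trans (leq_card_setU _ _) _.
have h2 : #|[set y : 'I_m | (nat_of_ord y).+1 == nat_of_ord x]| <= 1.
  case: (nat_of_ord x) => [|c].
    rewrite (_ : [set y | _] = set0) ?cards0 //; apply/setP => y; by rewrite !inE.
  apply: leq_trans (card_val_eq c); apply: subset_leq_card; apply/subsetP => y; by rewrite !inE eqSS.
have h1 := card_val_eq (nat_of_ord x).+1; lia.
Qed.

Lemma EE_pos x : 1 < m -> exists y, EE x y.
Proof.
move=> m1.
case h : ((nat_of_ord x).+1 < m).
  exists (Ordinal h); by rewrite /EE /pe /= eqxx orbT.
move/negbT: h => h.
have x0 : 0 < nat_of_ord x by have := ltn_ord x; lia.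
have hy : (nat_of_ord x).-1 < m by have := ltn_ord x; lia.
exists (Ordinal hy); rewrite /EE /pe /=; apply/orP; right; apply/orP; right.
apply/eqP; lia.
Qed.

Lemma sum_pre : \sum_(x : 'I_m) #|[set z : 'I_k * 'I_m | F z == x]| = k * m.
Proof.
transitivity (\sum_(x : 'I_m) \sum_(z : 'I_k * 'I_m) ((F z == x) : nat)).
  apply: eq_bigr => x _; rewrite -sum1_card big_mkcond /=; apply: eq_bigr => z _.
  by rewrite inE; case: (F z == x).
rewrite exchange_big /=.
transitivity (\sum_(z : 'I_k * 'I_m) 1).
  apply: eq_bigr => z _; rewrite -big_mkcond /= sum1_card.
  by rewrite (eq_card1 (x := F z)) // => y; rewrite !inE eq_sym.
by rewrite sum1_card card_prod !card_ord.
Qed.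

Lemma deg0_le x : deg0 x <= k + #|[set z : 'I_k * 'I_m | F z == x]|.
Proof.
have sub : [set y | E0 x y] \subset [set F (j, x) | j : 'I_k] :|: [set z.2 | z in [set z : 'I_k * 'I_m | F z == x]].
  apply/subsetP => y; rewrite inE /E0 => /andP[_ /existsP[j /orP[/eqP h|/eqP h]]]; apply/setUP.
    by left; apply/imsetP; exists j.
  by right; apply/imsetP; exists (j, y) => //; rewrite inE h.
rewrite /deg0; apply: leq_trans (subset_leq_card sub) _.
apply: leq_trans (leq_card_setU _ _) _; apply: leq_add.
  by apply: leq_trans (leq_imset_card _ _) _; rewrite card_ord.
exact: leq_imset_card.
Qed.

Lemma bad_count : #|[set x | ~~ good x]| * D.+1 <= 2 * (k * m).
Proof.
rewrite -sum_nat_const.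
apply: leq_trans (_ : \sum_(x in [set x | ~~ good x]) deg0 x <= _).
  apply: leq_sum => x; rewrite inE /good; lia.
apply: leq_trans (_ : \sum_(x : 'I_m) deg0 x <= _).
  rewrite [X in _ <= X](bigID (mem [set x | ~~ good x])) /=; exact: leq_addr.
apply: leq_trans (_ : \sum_(x : 'I_m) (k + #|[set z : 'I_k * 'I_m | F z == x]|) <= _).
  apply: leq_sum => x _; exact: deg0_le.
rewrite big_split /= sum_pre sum_nat_const card_ord; lia.
Qed.

Lemma EE_expand t :
  (forall A B : {set 'I_m}, #|A| = t -> #|B| = t -> exists z : 'I_k * 'I_m, z.2 \in A /\ F z \in B) ->
  forall A B : {set 'I_m}, #|A| = t -> #|B| = t -> A \subset [set x | good x] -> B \subset [set x | good x] ->
  exists a b, [/\ a \in A, b \in B & (a = b \/ EE a b)].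
Proof.
move=> HF A B hA hB sA sB; have [[j a] [/= aA bB]] := HF A B hA hB.
exists a, (F (j, a)); split => //.
case: (eqVneq a (F (j, a))) => [e|ne]; [by left | right].
have ga : good a by have := subsetP sA a aA; rewrite inE.
have gb : good (F (j,a)) by have := subsetP sB _ bB; rewrite inE.
rewrite /EE /E0 ne ga gb /= !andbT; apply/orP; left; apply/existsP; exists j; by rewrite eqxx.
Qed.
End Graph.

Section Trees.
Variables (m : nat) (E : rel 'I_m).
Hypothesis Esym : forall x y, E x y = E y x.
Hypothesis Eirr : forall x, E x x = false.
Hypothesis Epos : forall x, exists y, E x y.

Local Notation Vt := (('I_m + 'I_m * 'I_m) + 'I_m * 'I_m)%type.
Definition root (x : 'I_m) : Vt := inl (inl x).
Definition mid (x y : 'I_m) : Vt := inl (inr (x, y)).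
Definition lf (x y : 'I_m) : Vt := inr (if x < y then (x, y) else (y, x)).
Definition other (x : 'I_m) (v : Vt) : 'I_m :=
  match v with inr (a, b) => if a == x then b else a | _ => x end.
Definition pp (x : 'I_m) (v : Vt) : Vt :=
  match v with inr _ => mid x (other x v) | _ => root x end.
Definition NN x := [set y | E x y].
Definition SS x : {set Vt} := root x |: ([set mid x y | y in NN x] :|: [set lf x y | y in NN x]).

Lemma lf_sym x y : lf x y = lf y x.
Proof.
rewrite /lf; case: ltnP => h1; case: ltnP => h2 //; try lia.
have e : x = y by apply: ord_inj; lia.
by rewrite e.
Qed.

Lemma other_lf x y : other x (lf x y) = y.
Proof.
rewrite /lf /other; case: ltnP => h; first by rewrite eqxx.
case: eqP => // e; subst; apply: ord_inj; lia.
Qed.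

Lemma pp_lf x y : pp x (lf x y) = mid x y.
Proof. by rewrite -{2}(other_lf x y) /lf. Qed.

Lemma lf_root x y z : (lf x y == root z) = false.
Proof. by rewrite /lf. Qed.

Lemma lf_eq x y x' y' : lf x y = lf x' y' -> (x = x' /\ y = y') \/ (x = y' /\ y = x').
Proof.
rewrite /lf; case: ltnP => h1; case: ltnP => h2 [e1 e2]; subst; auto.
Qed.

Lemma SSP x v : reflect (v = root x \/ (exists2 y, E x y & v = mid x y) \/ (exists2 y, E x y & v = lf x y)) (v \in SS x).
Proof.
apply: (iffP idP).
  rewrite /SS !inE => /orP[/eqP -> | /orP[/imsetP[y]|/imsetP[y]]]; rewrite ?inE; auto.
    by move=> ey ->; right; left; exists y.
  by move=> ey ->; right; right; exists y.
rewrite /SS !inE => [][->|[[y ey ->]|[y ey ->]]]; rewrite ?eqxx //; apply/orP; right; apply/orP.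
  by left; apply: imset_f; rewrite inE.
by right; apply: imset_f; rewrite inE.
Qed.


Definition hh : Vt -> 'I_#|{: Vt}| := @enum_rank Vt.
Definition hi (u : 'I_#|{: Vt}|) : Vt := enum_val u.
Lemma hK : cancel hh hi. Proof. exact: enum_rankK. Qed.
Lemma hiK : cancel hi hh. Proof. exact: enum_valK. Qed.
Lemma hinj : injective hh. Proof. exact: (can_inj hK). Qed.

Definition TS i : {set 'I_#|{: Vt}|} := hh @: SS i.
Definition tp i (u : 'I_#|{: Vt}|) := hh (pp i (hi u)).
Definition tr i := hh (root i).

Lemma inS i a : (hh a \in TS i) = (a \in SS i).
Proof. by rewrite /TS mem_imset //; exact: hinj. Qed.

Lemma p_h i a : tp i (hh a) = hh (pp i a).
Proof. by rewrite /tp hK. Qed.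

Lemma iter_p i k a : iter k (tp i) (hh a) = hh (iter k (pp i) a).
Proof. by elim: k => //= k ->; rewrite p_h. Qed.

Lemma heq a b : (hh a == hh b) = (a == b).
Proof. by apply/eqP/eqP => [/hinj|->]. Qed.

Lemma child_h i a b : child TS tp tr i (hh a) (hh b) = [&& b \in SS i, b != root i & pp i b == a].
Proof. by rewrite /child inS /tr heq p_h heq. Qed.

Lemma pp_inl i b : exists c, pp i b = inl c.
Proof. by case: b => [c|c]; eexists. Qed.

Lemma leafP i u : reflect (exists2 y, E i y & u = hh (lf i y)) (leaf TS tp tr i u).
Proof.
rewrite -(hiK u); move: (hi u) => a {u}.
apply: (iffP idP).
  rewrite /leaf inS => /andP[/SSP aS /forallP nc].
  case: aS => [ea|[[y ey ea]|[y ey ea]]]; last by exists y; rewrite // ea.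
    have [y ey] := Epos i.
    have := nc (hh (mid i y)); rewrite child_h ea.
    have hm : mid i y \in SS i by apply/SSP; right; left; exists y.
    by rewrite hm /= eqxx.
  have hm : lf i y \in SS i by apply/SSP; right; right; exists y.
  by have := nc (hh (lf i y)); rewrite child_h ea hm lf_root pp_lf eqxx.
move=> [y ey /hinj ->]; rewrite /leaf inS; apply/andP; split.
  by apply/SSP; right; right; exists y.
apply/forallP => w; rewrite -(hiK w) child_h.
have [c ->] := pp_inl i (hi w); by rewrite !andbF.
Qed.

Lemma leaf_ex i v : leaf TS tp tr i v -> exists2 y, E i y & v = hh (lf i y).
Proof. by move/leafP. Qed.

Lemma adjP i j : adjacent TS tp tr i j = E i j.
Proof.
apply/andP/idP.
  move=> [ij /existsP[v /andP[/leaf_ex[y ey ev] /leaf_ex[y' ey' ev']]]].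
  rewrite ev in ev'; have := lf_eq (hinj ev') => [][[e1 e2]|[e1 e2]].
    by rewrite e1 eqxx in ij.
  by rewrite -e2.
move=> eij; split.
  by apply/eqP => e; rewrite e Eirr in eij.
apply/existsP; exists (hh (lf i j)); apply/andP; split; apply/leafP.
  by exists j.
by exists i; [rewrite Esym | rewrite lf_sym].
Qed.

Lemma SS_cases i a : a \in SS i -> a = root i \/ (exists2 y, E i y & a = mid i y) \/ (exists2 y, E i y & a = lf i y).
Proof. by move/SSP. Qed.

Lemma rooted_ok i : rooted_tree TS tp tr i.
Proof.
split; first by rewrite /tr inS; apply/SSP; left.
split.
  move=> v; rewrite -(hiK v) inS /tr heq p_h inS => /SS_cases[->|[[y ey ->]|[y ey ->]]].
  - by rewrite eqxx.
  - by move=> _; apply/SSP; left.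
  - by move=> _; rewrite pp_lf; apply/SSP; right; left; exists y.
move=> v; rewrite -(hiK v) inS => /SS_cases[->|[[y ey ->]|[y ey ->]]].
- by exists 0.
- by exists 1; rewrite iter_p.
- by exists 2; rewrite iter_p.
Qed.

Lemma extended_ok i : extended TS tp tr i.
Proof.
split; first exact: rooted_ok.
move=> v w /leaf_ex[y ey ->]; apply/negP => /and3P[wv _].
have [b eb] : exists b, w = hh b by exists (hi w); rewrite hiK.
subst w; rewrite p_h pp_lf child_h heq in wv *.
move=> /and3P[/SS_cases[->|[[y' ey' e]|[y' ey' e]]]].
- by rewrite eqxx.
- by rewrite e.
- by rewrite e => _; rewrite !pp_lf => /eqP[e']; subst y'; rewrite e eqxx in wv.
Qed.

Definition mf (u : 'I_#|{: Vt}|) : option 'I_m :=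
  match hi u with inl (inr (x, _)) => Some x | _ => None end.

Lemma mf_S j v : v \in TS j -> mf v = None \/ mf v = Some j.
Proof.
rewrite -(hiK v) inS /mf hK => /SS_cases[->|[[y ey ->]|[y ey ->]]]; auto.
Qed.

Lemma mf_p j v : mf (tp j v) = None \/ mf (tp j v) = Some j.
Proof.
rewrite /tp /mf hK; case: (hi v) => [c|c] /=; auto.
Qed.

Lemma mf_root i v : v \in TS i -> v != tr i -> mf v = Some i \/ mf (tp i v) = Some i.
Proof.
rewrite -(hiK v) inS /tr heq p_h /mf !hK => /SS_cases[->|[[y ey ->]|[y ey ->]]].
- by rewrite eqxx.
- by auto.
- by rewrite pp_lf; auto.
Qed.

Lemma edges_ok i j : i != j -> [disjoint tree_edges TS tp tr i & tree_edges TS tp tr j].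
Proof.
move=> ij; rewrite disjoints_subset; apply/subsetP => e /imsetP[v]; rewrite inE => /andP[vr vS] ->.
rewrite inE; apply/negP => /imsetP[w]; rewrite inE => /andP[wr wS] /setP ew.
have key : forall u, u \in [set v; tp i v] -> mf u = Some i -> False.
  move=> u; rewrite ew !inE => /orP[/eqP ->|/eqP ->] hu.
    case: (mf_S wS) => h; rewrite h in hu => //; case: hu => e'; by rewrite e' eqxx in ij.
  case: (mf_p j w) => h; rewrite h in hu => //; case: hu => e'; by rewrite e' eqxx in ij.
case: (mf_root vS (_ : v != tr i)) => [|h|h]; first by rewrite inE in vr.
  by apply: (key v) => //; rewrite !inE eqxx.
by apply: (key (tp i v)) => //; rewrite !inE eqxx orbT.
Qed.

Lemma leaf_set i v : leaf TS tp tr i v -> #|[set j | leaf TS tp tr j v]| = 2.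
Proof.
move=> /leaf_ex[y ey ->].
have -> : [set j | leaf TS tp tr j (hh (lf i y))] = [set i; y].
  apply/setP => j; rewrite !inE; apply/leafP/orP.
    move=> [y' ey' /hinj e]; case: (lf_eq e) => [][e1 e2].
      by left; rewrite e1.
    by right; rewrite e2.
  move=> [/eqP ->|/eqP ->]; first by exists y.
  by exists i; [rewrite Esym | rewrite lf_sym].
rewrite cards2; case: eqP => // e; by rewrite e Eirr in ey.
Qed.

Lemma lf_neq_root x y z : lf x y <> root z.
Proof. by rewrite /lf /root; case: ifP. Qed.
Lemma lf_neq_mid x y z w : lf x y <> mid z w.
Proof. by rewrite /lf /mid; case: ifP. Qed.

Lemma inter_key i j v : i != j -> v \in TS i :&: TS j -> E i j /\ v = hh (lf i j).
Proof.
move=> ij; rewrite inE -(hiK v) !inS; move: (hi v) => a.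
move=> /andP[/SS_cases ha /SS_cases hb].
have nij : i = j -> False by move=> e; rewrite e eqxx in ij.
case: ha => [ea|[[y ey ea]|[y ey ea]]]; case: hb => [eb|[[y' ey' eb]|[y' ey' eb]]];
  rewrite ea in eb.
- by case: nij; case: eb.
- by [].
- by case: (lf_neq_root (esym eb)).
- by [].
- by case: nij; case: eb.
- by case: (lf_neq_mid (esym eb)).
- by case: (lf_neq_root eb).
- by case: (lf_neq_mid eb).
- case: (lf_eq eb) => [][e1 e2]; first by case: nij.
  by subst; split => //; rewrite ea.
Qed.

Lemma inter_ok i j : i != j -> #|TS i :&: TS j| <= 1 /\
  forall v, v \in TS i :&: TS j -> leaf TS tp tr i v && leaf TS tp tr j v.
Proof.
move=> ij; split.
  apply/card_le1_eqP => v w /(inter_key ij)[_ ->] /(inter_key ij)[_ ->] //.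
move=> v /(inter_key ij)[eij ->]; apply/andP; split; apply/leafP.
  by exists j.
by exists i; [rewrite Esym | rewrite lf_sym].
Qed.

Lemma btb_ok : binary_tree_based TS tp tr.
Proof.
split; first exact: extended_ok.
split; first exact: edges_ok.
split; first exact: leaf_set.
exact: inter_ok.
Qed.

Lemma roots_ok : roots_distinct tr.
Proof. by move=> x y /hinj [e]. Qed.

Lemma height_ok i v : leaf TS tp tr i v -> iter 2 (tp i) v = tr i.
Proof. by move=> /leaf_ex[y ey ->]; rewrite iter_p. Qed.

Lemma pdeg_ok i : pseudodegree TS tp tr i = #|[set j | E i j]|.
Proof. by rewrite /pseudodegree; apply: eq_card => j; rewrite !inE adjP. Qed.

End Trees.

Lemma subset_card_eq (T : finType) (X : {set T}) t : t <= #|X| -> exists2 A : {set T}, A \subset X & #|A| = t.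
Proof.
move=> h; have [n e] : exists n, #|X| = n + t by exists (#|X| - t); rewrite subnK.
elim: n X e {h} => [|n IH] X e; first by exists X.
have : 0 < #|X| by rewrite e addSn.
rewrite card_gt0 => /set0Pn [x xX].
have [A sA cA] : exists2 A : {set T}, A \subset X :\ x & #|A| = t.
  apply: IH; move: e; rewrite (cardsD1 x X) xX addSn add1n => [][->] //.
exists A => //; apply: subset_trans sA _; exact: subsetDl.
Qed.

Section Match.
Variables (m : nat) (adj : rel 'I_m) (Bd : {set 'I_m}) (t : nat) (s : R).
Hypothesis Hexp : forall A B : {set 'I_m}, #|A| = t -> #|B| = t -> A \subset ~: Bd -> B \subset ~: Bd ->
  exists a b, [/\ a \in A, b \in B & (a = b \/ adj a b)].
Hypothesis Hs : (INR (t + #|Bd|) <= 2 * s / 3)%R.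

Definition pmb (U V : {set 'I_m}) (M : {set 'I_m * 'I_m}) : bool :=
  [forall e in M, [&& e.1 \in U, e.2 \in V & adj e.1 e.2]] &&
  [forall e in M, forall f in M, (e != f) ==> [&& e.1 != f.1, e.1 != f.2, e.2 != f.1 & e.2 != f.2]].

Lemma big_part (U : {set 'I_m}) (M : {set 'I_m * 'I_m}) (f : 'I_m * 'I_m -> 'I_m) :
  (s <= INR #|U|)%R -> (INR #|M| < s / 3)%R ->
  t <= #|U :\: (f @: M) :\: Bd|.
Proof.
move=> hU hM.
have sub : U \subset (U :\: (f @: M) :\: Bd) :|: (f @: M) :|: Bd.
  apply/subsetP => x xU; rewrite !inE xU.
  by case: (x \in Bd); case: (x \in f @: M).
have c1 := subset_leq_card sub.
have c2 := leq_of_leqif (leq_card_setU ((U :\: (f @: M) :\: Bd) :|: (f @: M)) Bd).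
have c3 := leq_of_leqif (leq_card_setU (U :\: (f @: M) :\: Bd) (f @: M)).
have c4 : #|f @: M| <= #|M| by exact: leq_imset_card.
have c : #|U| <= #|U :\: (f @: M) :\: Bd| + #|M| + #|Bd|.
  by apply: (leq_trans c1); apply: (leq_trans c2); rewrite leq_add2r; apply: (leq_trans c3); rewrite leq_add2l.
apply/leP; apply: INR_le.
have := le_INR _ _ (leP c); rewrite !plus_INR.
have Hs2 := Hs; rewrite plus_INR in Hs2.
lra.
Qed.


Lemma match_ok (U V : {set 'I_m}) : [disjoint U & V] ->
  (s <= INR #|U|)%R -> (s <= INR #|V|)%R ->
  exists M : {set 'I_m * 'I_m},
    ((forall e, e \in M -> [&& e.1 \in U, e.2 \in V & adj e.1 e.2]) /\
     (forall e f, e \in M -> f \in M -> e != f ->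
       [/\ e.1 != f.1, e.1 != f.2, e.2 != f.1 & e.2 != f.2])) /\
    (s / 3 <= INR #|M|)%R.
Proof.
move=> dUV hU hV.
have pm0 : pmb U V set0.
  by apply/andP; split; apply/forallP => e; rewrite inE.
case: (@arg_maxnP _ set0 (pmb U V) (fun M => #|M|) pm0) => M pmM maxM.
exists M; split.
  case/andP: pmM => /forallP h1 /forallP h2; split.
    by move=> e eM; have := h1 e; rewrite eM.
  move=> e f eM fM ef; have := h2 e; rewrite eM /= => /forallP /(_ f); rewrite fM ef /=.
  by move=> /and4P[].
case: (Rle_lt_dec (s / 3) (INR #|M|)) => // hM; exfalso.
have [A sA cA] := subset_card_eq (big_part (fun e : 'I_m * 'I_m => e.1) hU hM).
have [B sB cB] := subset_card_eq (big_part (fun e : 'I_m * 'I_m => e.2) hV hM).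
have sAB : forall (W : {set 'I_m}) (f : 'I_m * 'I_m -> 'I_m) (X : {set 'I_m}),
    X \subset W :\: (f @: M) :\: Bd -> X \subset ~: Bd.
  by move=> W f X /subset_trans; apply; apply/subsetP => x; rewrite !inE => /andP[].
have [a [b [aA bB hab]]] := Hexp cA cB (sAB _ _ _ sA) (sAB _ _ _ sB).
have aU : a \in U by move: (subsetP sA a aA); rewrite !inE => /and3P[].
have bV : b \in V by move: (subsetP sB b bB); rewrite !inE => /and3P[].
have aM : a \notin [set e.1 | e in M] by move: (subsetP sA a aA); rewrite !inE => /and3P[].
have bM : b \notin [set e.2 | e in M] by move: (subsetP sB b bB); rewrite !inE => /and3P[].
have ab : a != b by apply/eqP => e; subst b; rewrite (disjointFr dUV aU) in bV.
have adjab : adj a b by case: hab => // e; rewrite e eqxx in ab.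
have nM : (a, b) \notin M by apply: contra aM => h; apply/imsetP; exists (a, b).
case/andP: pmM => /forallP h1 /forallP h2.
have pmM' : pmb U V ((a, b) |: M).
  apply/andP; split; apply/forallP => e; apply/implyP; rewrite !inE.
    case/orP => [/eqP -> /=|eM]; first by rewrite aU bV adjab.
    by have := h1 e; rewrite eM.
  case/orP => [/eqP ->|eM]; apply/forallP => f; apply/implyP; rewrite !inE.
    case/orP => [/eqP ->|fM]; first by rewrite eqxx.
    apply/implyP => _ /=.
    have f1U : f.1 \in U by have := h1 f; rewrite fM => /and3P[].
    have f2V : f.2 \in V by have := h1 f; rewrite fM => /and3P[].
    apply/and4P; split.
    - by apply: contra aM => /eqP ->; apply/imsetP; exists f.
    - by apply/eqP => e0; rewrite -e0 (disjointFr dUV aU) in f2V.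
    - by apply/eqP => e0; rewrite e0 (disjointFr dUV f1U) in bV.
    - by apply: contra bM => /eqP ->; apply/imsetP; exists f.
  case/orP => [/eqP ->|fM].
    apply/implyP => _ /=.
    have e1U : e.1 \in U by have := h1 e; rewrite eM => /and3P[].
    have e2V : e.2 \in V by have := h1 e; rewrite eM => /and3P[].
    apply/and4P; split.
    - by apply: contra aM => /eqP <-; apply/imsetP; exists e.
    - by apply/eqP => e'; rewrite e' in e1U; rewrite (disjointFr dUV e1U) in bV.
    - by apply/eqP => e'; rewrite e' in e2V; rewrite (disjointFr dUV aU) in e2V.
    - by apply: contra bM => /eqP <-; apply/imsetP; exists e.
  by have := h2 e; rewrite eM => /forallP /(_ f); rewrite fM.
have := maxM _ pmM'; rewrite cardsU1 nM /=.
by rewrite ltnn.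
Qed.

End Match.

Lemma pow_ge a n k : 0 < a -> n <= k -> a ^ n <= a ^ k.
Proof. by move=> a0 nk; apply: leq_pexp2l. Qed.

Lemma params a m : 5000 <= a -> a * a <= m ->
  [/\ 0 < m, 4 * (a + 1) <= m, m <= 4 * (a + 1) * (m %/ (2 * (a + 1))),
      4 * (a + 1) * (2 * m + 1) <= 100 * ((a + 1) * (a + 1)) * (m %/ (2 * (a + 1))) &
      6 * (a + 1) * (m %/ (2 * (a + 1))) <= 3 * m].
Proof.
move=> ha hm.
have h1 : 5000 * a <= a * a by rewrite leq_mul2r ha orbT.
have m4 : 4 * (a + 1) <= m by move: h1 hm; set aa := a * a; lia.
have dv := divn_eq m (2 * (a + 1)).
have md : m %% (2 * (a + 1)) < 2 * (a + 1) by apply: ltn_pmod; lia.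
move: dv md; set q := m %/ (2 * (a + 1)); set rr := m %% (2 * (a + 1)) => dv md.
split; nia.
Qed.

Lemma bad_bound a m bd P : 5000 <= a -> 1200 * ((a + 1) * (a + 1) * (a + 1)) <= P ->
  bd * P.+1 <= 2 * (100 * ((a + 1) * (a + 1)) * m) -> 6 * (a + 1) * bd <= m.
Proof. move=> ha key h; nia. Qed.

Lemma key_pow a : 5000 <= a -> 1200 * ((a + 1) * (a + 1) * (a + 1)) <= a ^ 199.
Proof.
move=> ha.
have h4 : a ^ 5 <= a ^ 199 by apply: pow_ge; lia.
apply: leq_trans h4.
have e4 : a ^ 5 = a * a * a * a * a by rewrite !expnS expn0 muln1 !mulnA.
rewrite e4.
have b1 : (a + 1) * (a + 1) * (a + 1) <= 8 * (a * a * a) by nia.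
have b2 : (96 * 100) <= a * a by nia.
have -> : a * a * a * a * a = (a * a) * (a * a * a) by rewrite !mulnA.
apply: leq_trans (_ : (96 * 100) * (a * a * a) <= _); last by rewrite leq_mul2r b2 orbT.
move: b1; set c := a * a * a; lia.
Qed.

Lemma deg_bound a P : 2 <= a -> 2 <= P -> P + 2 <= a * P.
Proof. move=> ha hP; nia. Qed.

Lemma INR_expn a n : INR (a ^ n) = (INR a ^ n)%R.
Proof. elim: n => [|n IH]; first by rewrite expn0. by rewrite expnS mult_INR IH /=. Qed.

Lemma Rpower_pos x y : (0 < Rpower x y)%R.
Proof. rewrite /Rpower; exact: exp_pos. Qed.

Lemma floor_nat x : (0 <= x)%R -> exists a : nat, (INR a <= x < INR a + 1)%R.
Proof.
move=> x0; have [h1 h2] := base_Int_part x.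
have z0 : (0 <= Int_part x)%Z.
  have : (IZR (-1) < IZR (Int_part x))%R by lra.
  move/lt_IZR; lia.
exists (Z.to_nat (Int_part x)); rewrite INR_IZR_INZ Znat.Z2Nat.id //; lra.
Qed.

Lemma Rpower_inv_pow (y : R) (n : nat) : (0 < y)%R -> (0 < n)%N ->
  (Rpower y (/ INR n) ^ n)%R = y.
Proof.
move=> y0 n0; rewrite -(@Rpower_pow n _ (Rpower_pos y (/ INR n))) Rpower_mult Rinv_l ?Rpower_1 //.
apply: not_0_INR; lia.
Qed.

Lemma INR_lit1000 : INR 1000 = 1000%R.
Proof. by rewrite INR_IZR_INZ. Qed.

Lemma log2_nonneg (m : nat) : (1 < m)%N -> (0 <= log2 (INR m))%R.
Proof.
move=> m1; rewrite /log2.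
have l2 : (0 < ln 2)%R by rewrite -ln_1; apply: ln_increasing; lra.
have hm : (1 < INR m)%R by rewrite -/(INR 1); apply: lt_INR; apply/ltP.
have lm : (0 < ln (INR m))%R by rewrite -ln_1; apply: ln_increasing; lra.
apply: Rlt_le; apply: Rdiv_lt_0_compat => //.
Qed.

Theorem theorem1 :
  exists m0 : nat, forall m : nat, (m0 <= m)%N ->
    exists (n : nat) (S : 'I_m -> {set 'I_n}) (p : 'I_m -> 'I_n -> 'I_n)
           (r : 'I_m -> 'I_n),
      pseudoexpander S p r /\
      forall i : 'I_m,
        (INR (pseudodegree S p r i) <= Rpower (INR m) (10 / 49))%R.
Proof.
exists (5000 ^ 1000)%N => m hm.
have m_pos : (0 < m)%N by apply: leq_trans hm; rewrite expn_gt0.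
have hmR : (0 < INR m)%R by apply: lt_0_INR; apply/ltP.
set x := Rpower (INR m) (/ INR 1000).
have x0 : (0 < x)%R by apply: Rpower_pos.
have hx1000 : (x ^ 1000)%R = INR m by apply: Rpower_inv_pow.
have hx5000 : (INR 5000 <= x)%R.
  have h5 : (0 < INR 5000)%R by apply: lt_0_INR; lia.
  have -> : INR 5000 = Rpower (INR (5000 ^ 1000)) (/ INR 1000).
    rewrite INR_expn -Rpower_pow // Rpower_mult Rinv_r ?Rpower_1 //.
    rewrite INR_lit1000; lra.
  apply: Rle_Rpower_l.
    rewrite INR_lit1000; lra.
  split; first by apply: lt_0_INR; apply/ltP; rewrite expn_gt0.
  by apply: le_INR; apply/leP.
clear hm.
have [a [ha1 ha2]] := floor_nat (Rlt_le _ _ x0).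
have ha : (5000 <= a)%N.
  have : (INR 5000 < INR (a + 1))%R by rewrite plus_INR; change (INR 1) with 1%R; lra.
  move/INR_lt => h; apply/leP; lia.
have ham : (a * a <= m)%N.
  have h1 : (a ^ 1000 <= m)%N.
    apply/leP; apply: INR_le; rewrite INR_expn -hx1000.
    apply: pow_incr; split => //; exact: pos_INR.
  apply: leq_trans h1; have -> : a * a = a ^ 2 by rewrite expnS expn1.
  by apply: pow_ge; lia.
have [m0' m4 hjt hk h6t] := params ha ham.
set t := m %/ (2 * (a + 1)) in hjt hk h6t.
set k := 100 * ((a + 1) * (a + 1)) in hk.
have cnt : (2 ^ m * 2 ^ m * ((m - t) ^ (k * t) * m ^ (k * (m - t))) < m ^ (k * m))%N.
  apply: (count_ineq (j := 4 * (a + 1))) => //.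
  - lia.
  - exact: leq_div.
  - move: hjt; set jt := 4 * (a + 1) * t; lia.
have [F HF] := exists_good_F m_pos cnt.
clear cnt.
have m1 : (1 < m)%N by lia.
move Dd : (a ^ 199) => D.
set E := EE D F.
have Esym : forall x y, E x y = E y x by move=> x1 y1; apply: EE_sym.
have Eirr : forall x, E x x = false by move=> x1; apply: EE_irr.
have Epos : forall x, exists y, E x y by move=> x1; apply: EE_pos.
set Bd := [set z | ~~ good D F z].
have hbad : (6 * (a + 1) * #|Bd| <= m)%N.
  apply: (bad_bound (P := D)) => //; first by rewrite -Dd; exact: key_pow.
  exact: bad_count.
set s := Rpower (INR m) (999 / 1000).
have hsx : (s * x)%R = INR m.
  rewrite /s /x -Rpower_plus INR_lit1000.
  have -> : (999 / 1000 + / 1000 = 1)%R by lra.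
  by rewrite Rpower_1.
have s0 : (0 < s)%R by apply: Rpower_pos.
have Hs : (INR (t + #|Bd|) <= 2 * s / 3)%R.
  have hn : (6 * (a + 1) * (t + #|Bd|) <= 4 * m)%N.
    clear -h6t hbad; move: h6t hbad; set u := 6 * (a + 1) * t; rewrite mulnDr; lia.
  have := le_INR _ _ (leP hn); rewrite !mult_INR plus_INR.
  set T := INR (t + #|Bd|).
  have -> : INR 6 = 6%R by rewrite INR_IZR_INZ.
  have -> : INR 4 = 4%R by rewrite INR_IZR_INZ.
  have -> : INR 1 = 1%R by [].
  move=> h.
  have ha0 := pos_INR a.
  have hT := pos_INR (t + #|Bd|).
  rewrite -hsx in h.
  have h2 : (6 * (INR a + 1) * T <= 4 * s * (INR a + 1))%R by nra.
  nra.
exists #|{: (('I_m + 'I_m * 'I_m) + 'I_m * 'I_m)%type}|, (TS E), (@tp m), (@tr m).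
split.
  split; first exact: btb_ok.
  split; first exact: roots_ok.
  split.
    move=> i v lv; exists 2; split; first exact: height_ok.
    have := log2_nonneg m1.
    have -> : INR 3 = 3%R by rewrite INR_IZR_INZ.
    move=> hl; lra.
  move=> U V dUV hU hV.
  have Hexp : forall A B : {set 'I_m}, #|A| = t -> #|B| = t -> A \subset ~: Bd -> B \subset ~: Bd ->
      exists a b, [/\ a \in A, b \in B & (a = b \/ adjacent (TS E) (@tp m) (@tr m) a b)].
    move=> A B cA cB sA sB.
    have eB : ~: Bd = [set z | good D F z] by apply/setP => z; rewrite !inE negbK.
    rewrite eB in sA sB.
    have [a' [b' [aA bB h]]] := EE_expand HF cA cB sA sB.
    exists a', b'; split => //; rewrite adjP //.
  have [M [[h1 h2] h3]] := match_ok Hexp Hs dUV hU hV.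
  by exists M; split.
move=> i; rewrite pdeg_ok //.
have hd : (#|[set j | E i j]| <= a ^ 200)%N.
  apply: leq_trans (EE_deg D F i) _.
  rewrite expnS Dd; apply: deg_bound; first by clear -ha; lia.
  rewrite -Dd; apply: leq_trans (_ : a ^ 1 <= _)%N; first by rewrite expn1; clear -ha; lia.
  by apply: pow_ge; clear -ha; lia.
apply: Rle_trans (le_INR _ _ (leP hd)) _.
rewrite INR_expn.
apply: Rle_trans (_ : (x ^ 200 <= _)%R).
  by apply: pow_incr; split; [exact: pos_INR | exact: ha1].
rewrite -Rpower_pow // /x Rpower_mult.
apply: Rle_Rpower.
  by rewrite -/(INR 1); apply: le_INR; apply/leP.
have -> : INR 200 = 200%R by rewrite INR_IZR_INZ.
rewrite INR_lit1000; lra.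
Qed.
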